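(* Let $\Gamma$ be a triangulation of a connected closed surface $M$ and let $\tau$ be a $z$-orientation of $\Gamma$. Then every face of $\Gamma$ satisfies exactly one of the following: (I) the face contains two edges of type I and its third edge is of type II; (II) all three edges of the face are of type II and, with their directions, they form a directed cycle.
   Context: Let $M$ be a connected closed $2$-dimensional surface (not necessarily orientable). A triangulation of $M$ is a $2$-cell embedding of a connected simple finite graph in $M$ such that every face is a triangle; then every edge lies in exactly two distinct faces, and two distinct faces meet in an edge, in a vertex, or not at all. A zigzag in a triangulation $\Gamma$ is a sequence of edges $(e_i)_{i\in\mathbb N}$ such that for every $i$: $e_i$ and $e_{i+1}$ are distinct edges of a common face; the face containing $e_i,e_{i+1}$ is different from the face containing $e_{i+1},e_{i+2}$; and $e_i$, $e_{i+2}$ have no common vertex. Such a sequence is periodic and is regarded as a cyclic sequence $e_1,\dots,e_n$ ($n$ the minimal period); a zigzag passes through each of its edges in a definite direction (from the vertex shared with the previous edge to the vertex shared with the next). The reversed sequence $Z^{-1}$ is again a zigzag and $Z\neq Z^{-1}$. If $\Gamma$ has exactly $k$ zigzags up to reversal, a $z$-orientation of $\Gamma$ is a set $\tau$ of $k$ zigzags containing exactly one of $Z,Z^{-1}$ for every zigzag $Z$. For a $z$-orientation $\tau$, each edge $e$ either occurs twice in one zigzag of $\tau$ and in no other, or occurs once in each of exactly two distinct zigzags of $\tau$ and in no other. The edge $e$ is of type I if these two passages through $e$ are in opposite directions, and of type II if they are in the same direction; edges of type II are regarded as directed edges with this common direction. *)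

(* Defs.v *)
From mathcomp Require Import all_boot.
Set Implicit Arguments. Unset Strict Implicit. Unset Printing Implicit Defensive.

Section Tri.
Variable V : finType.

Definition is_edge (F : {set {set V}}) (e : {set V}) : bool :=
  (#|e| == 2) && [exists f in F, e \subset f].

Definition adj (F : {set {set V}}) : rel V :=
  fun u w => (u != w) && is_edge F [set u; w].

Definition star_adj (F : {set {set V}}) (v : V) : rel {set V} :=
  fun f g => [&& f \in F, g \in F, v \in f, v \in g, f != g & #|f :&: g| == 2].

Definition triangulation (F : {set {set V}}) : Prop :=
  (F != set0 /\ (forall f, f \in F -> #|f| = 3)) /\
  [/\
      (forall v : V, exists2 f, f \in F & v \in f),
      (forall e, is_edge F e -> #|[set f in F | e \subset f]| = 2),
      (* the link of each vertex is a single cycle (closed surface) *)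
      (forall v f g, f \in F -> g \in F -> v \in f -> v \in g ->
         connect (star_adj F v) f g)
    &
      (forall u w : V, connect (adj F) u w)].

Definition zz (s : seq {set V}) (i : nat) : {set V} := nth set0 s (i %% size s).

(* A zigzag, regarded as a cyclic sequence e_0, ..., e_{n-1} (n minimal period). *)
Definition is_zigzag (F : {set {set V}}) (s : seq {set V}) : Prop :=
  (0 < size s /\ (forall k, 0 < k < size s -> rot k s != s)) /\
  [/\
      (forall i, is_edge F (zz s i)),
      (forall i, zz s i != zz s i.+1 /\
                 exists2 f, f \in F & (zz s i \subset f) && (zz s i.+1 \subset f)),
      (forall i f g, f \in F -> g \in F ->
         zz s i \subset f -> zz s i.+1 \subset f ->
         zz s i.+1 \subset g -> zz s i.+2 \subset g -> f != g)
    & (forall i, [disjoint zz s i & zz s i.+2])].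

Definition same_zig (s t : seq {set V}) : Prop := exists k, rot k s = t.

(* z-orientation: a set of zigzags containing exactly one of Z, Z^{-1}
   for every zigzag Z. *)
Definition z_orientation (F : {set {set V}}) (tau : seq (seq {set V})) : Prop :=
  [/\ (forall s, s \in tau -> is_zigzag F s),
      (forall i j, i < size tau -> j < size tau -> i != j ->
         ~ same_zig (nth [::] tau i) (nth [::] tau j))
    & (forall s, is_zigzag F s ->
         ((exists2 t, t \in tau & same_zig t s) /\
          ~ (exists2 t, t \in tau & same_zig t (rev s))) \/
         (~ (exists2 t, t \in tau & same_zig t s) /\
          (exists2 t, t \in tau & same_zig t (rev s))))].

(* direction of the passage of s through its i-th edge:
   (vertex shared with previous edge, vertex shared with next edge),
   both given as singleton sets. *)
Definition passage_dir (s : seq {set V}) (i : nat) : {set V} * {set V} :=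
  (zz s (i + (size s).-1) :&: zz s i, zz s i :&: zz s i.+1).

Definition passages (tau : seq (seq {set V})) (e : {set V}) :
    seq ({set V} * {set V}) :=
  flatten [seq [seq passage_dir s i | i <- iota 0 (size s) & nth set0 s i == e]
          | s <- tau].

Definition typeI (tau : seq (seq {set V})) (e : {set V}) : Prop :=
  exists x y : V, passages tau e = [:: ([set x], [set y]); ([set y], [set x])].

Definition typeII_dir (tau : seq (seq {set V})) (e : {set V}) (x y : V) : Prop :=
  passages tau e = [:: ([set x], [set y]); ([set x], [set y])].

Definition typeII (tau : seq (seq {set V})) (e : {set V}) : Prop :=
  exists x y : V, typeII_dir tau e x y.

Definition face_caseI (tau : seq (seq {set V})) (f : {set V}) : Prop :=
  exists a b c : V, [/\ f = [set a; b; c], a != b, b != c & a != c] /\ [/\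
    typeI tau [set a; b], typeI tau [set b; c] & typeII tau [set c; a]].

Definition face_caseII (tau : seq (seq {set V})) (f : {set V}) : Prop :=
  (forall e : {set V}, e \subset f -> #|e| = 2 -> typeII tau e) /\
  exists a b c : V, [/\ f = [set a; b; c], a != b, b != c & a != c] /\ [/\
    typeII_dir tau [set a; b] a b, typeII_dir tau [set b; c] b c
    & typeII_dir tau [set c; a] c a].

End Tri.

(* Main.v *)
Require Import Defs.
From mathcomp Require Import all_boot zify.
Set Implicit Arguments. Unset Strict Implicit. Unset Printing Implicit Defensive.


Definition tri3 (V : finType) (F : {set {set V}}) : Prop :=
  (forall f, f \in F -> #|f| = 3) /\
  (forall e, is_edge F e -> #|[set f in F | e \subset f]| = 2).

Lemma two_in_three (V : finType) (h u w : {set V}) : #|h| = 3 ->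
  u \subset h -> w \subset h -> #|u| = 2 -> #|w| = 2 -> u != w ->
  u :|: w = h /\ #|u :&: w| = 1.
Proof.
move=> h3 uh wh u2 w2 uw.
have U3 : #|u :|: w| <= 3 by rewrite -h3; apply: subset_leq_card; rewrite subUset uh.
have UI := cardsUI u w.
have I2 : #|u :&: w| <= 2 by rewrite -u2; apply: subset_leq_card; apply: subsetIl.
have I1 : #|u :&: w| != 2.
  apply/eqP => I2'.
  have E1 : u :&: w = u by apply/eqP; rewrite eqEcard subsetIl I2' u2.
  have E2 : u :&: w = w by apply/eqP; rewrite eqEcard subsetIr I2' w2.
  by move/eqP: uw; apply; rewrite -E1 E2.
have C3 : #|u :|: w| = 3 by lia.
split; last by lia.
by apply/eqP; rewrite eqEcard subUset uh wh h3 C3.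
Qed.

Definition oth (V : finType) (F : {set {set V}}) (f w : {set V}) : {set V} :=
  odflt set0 [pick g in [set g in F | w \subset g] :\ f].

Lemma oth_spec (V : finType) (F : {set {set V}}) (f w : {set V}) : tri3 F ->
  f \in F -> w \subset f -> #|w| = 2 ->
  [/\ oth F f w \in F, w \subset oth F f w, oth F f w != f &
      forall h, h \in F -> w \subset h -> h != f -> h = oth F f w].
Proof.
move=> [H3 H2] fF wf w2.
have ew : is_edge F w by rewrite /is_edge w2 eqxx /=; apply/existsP; exists f; rewrite fF.
have S2 := H2 _ ew.
set S := [set g in F | w \subset g] in S2.
have fS : f \in S by rewrite inE fF wf.
have S1 : #|S :\ f| = 1 by move: S2; rewrite (cardsD1 f) fS; case.
have [x Ex] : exists x, S :\ f = [set x] by apply/cards1P; rewrite S1.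
have Hm : forall h, h \in F -> w \subset h -> h != f -> h = x.
  move=> h hF wh hf.
  have : h \in S :\ f by rewrite !inE hf hF wh.
  by rewrite Ex inE => /eqP.
have xS : x \in S :\ f by rewrite Ex set11.
have oE : oth F f w = x.
  rewrite /oth; case: pickP => [g|].
    by rewrite Ex inE => /eqP ->.
  by move/(_ x); rewrite xS.
move: xS; rewrite !inE oE => /and3P[xf xF wx].
by split => // h hF wh hf; apply: Hm.
Qed.


Definition nxt (V : finType) (F : {set {set V}}) (u w : {set V}) : {set V} :=
  oth F (u :|: w) w :\: (u :&: w).

Definition valid (V : finType) (F : {set {set V}}) (p : {set V} * {set V}) : bool :=
  [&& #|p.1| == 2, #|p.2| == 2, p.1 != p.2 & p.1 :|: p.2 \in F].

Lemma valid_nxt (V : finType) (F : {set {set V}}) (u w : {set V}) : tri3 F ->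
  valid F (u, w) ->
  [/\ valid F (w, nxt F u w), [disjoint u & nxt F u w],
      w :|: nxt F u w = oth F (u :|: w) w & nxt F (nxt F u w) w = u].
Proof.
move=> HT; case/and4P => /= /eqP u2 /eqP w2 uw fF.
have [H3 H2] := HT.
set f := u :|: w in fF *.
have wf : w \subset f by apply: subsetUr.
have uf : u \subset f by apply: subsetUl.
have [gF wg gf gU] := oth_spec HT fF wf w2.
set g := oth F f w in gF wg gf gU *.
have [_ I1] := two_in_three (H3 _ fF) uf wf u2 w2 uw.
have [v Ev] : exists v, u :&: w = [set v] by apply/cards1P; rewrite I1.
have Iv : forall z, (z \in u) && (z \in w) = (z == v).
  by move=> z; rewrite -in_set1 -Ev inE.
have vw : v \in w by have := Iv v; rewrite eqxx => /andP[].
have vu : v \in u by have := Iv v; rewrite eqxx => /andP[].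
have nE : nxt F u w = g :\ v by rewrite /nxt -/f -/g Ev.
have g3 := H3 _ gF.
have vg : v \in g by apply: (subsetP wg).
have n2 : #|g :\ v| = 2 by move: g3; rewrite (cardsD1 v) vg; case.
have wnE : w :|: (g :\ v) = g.
  apply/setP => z; rewrite !inE; case: (eqVneq z v) => [->|zv] /=.
    by rewrite vw vg.
  by case zw: (z \in w) => //=; rewrite (subsetP wg _ zw).
have wn : w != g :\ v by apply/negP => /eqP E; move: vw; rewrite E !inE eqxx.
have disj : [disjoint u & g :\ v].
  apply/pred0P => z /=; rewrite !inE.
  case zu: (z \in u) => //=; case: (eqVneq z v) => [//|zv] /=.
  apply/negP => zg.
  have zw : z \notin w by apply/negP => zw; move: (Iv z); rewrite zu zw /= => /esym/eqP E; rewrite E eqxx in zv.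
  have E1 : g = z |: w.
    apply/esym/eqP; rewrite eqEcard subUset sub1set zg wg g3 cardsU1 zw w2.
    done.
  have E2 : f = z |: w.
    apply/esym/eqP; rewrite eqEcard subUset sub1set (subsetP uf _ zu) wf.
    by rewrite (H3 _ fF) cardsU1 zw w2.
  by move/eqP: gf; apply; rewrite E1 E2.
have Vn : valid F (w, g :\ v) by rewrite /valid /= w2 n2 wn wnE gF.
rewrite nE; split => //.
have [_ _ _ Hu] := oth_spec HT gF wg w2.
have fo : f = oth F g w by apply: Hu => //; rewrite eq_sym.
rewrite /nxt setUC wnE -fo.
apply/setP => z; rewrite !inE.
have := Iv z.
case zu: (z \in u); case zw: (z \in w); rewrite ?andbF ?andbT ?orbT ?orbF //=.
- by move/esym => ->.
- move/esym/negbT => ->; by rewrite (subsetP wg _ zw).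
Qed.

Lemma step (V : finType) (F : {set {set V}}) (A B C h1 h2 : {set V}) : tri3 F ->
  #|A| = 2 -> #|B| = 2 -> #|C| = 2 -> A != B -> B != C ->
  h1 \in F -> A \subset h1 -> B \subset h1 ->
  h2 \in F -> B \subset h2 -> C \subset h2 -> h1 != h2 ->
  [disjoint A & C] -> valid F (A, B) /\ C = nxt F A B.
Proof.
move=> HT A2 B2 C2 AB BC h1F Ah1 Bh1 h2F Bh2 Ch2 h12 dAC.
have [H3 H2] := HT.
have [U1 _] := two_in_three (H3 _ h1F) Ah1 Bh1 A2 B2 AB.
have V1 : valid F (A, B) by rewrite /valid /= A2 B2 AB U1 h1F.
split => //.
have [Vn _ _ _] := valid_nxt HT V1.
move: Vn => /and4P[_ /= /eqP n2 _ _].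
have [_ _ _ Hu] := oth_spec HT (h1F : h1 \in F) Bh1 B2.
have h2E : h2 = oth F h1 B by apply: Hu; rewrite // eq_sym.
apply/eqP; rewrite eqEcard n2 C2 leqnn andbT.
apply/subsetP => z zC; rewrite /nxt U1 -h2E !inE (subsetP Ch2 _ zC) andbT.
apply/negP => /andP[zA _].
by move: dAC => /pred0P /(_ z) /=; rewrite zA zC.
Qed.


Lemma zz_mod (V : finType) (s : seq {set V}) x : zz s (x %% size s) = zz s x.
Proof. by rewrite /zz modn_mod. Qed.

Lemma zz_modD (V : finType) (s : seq {set V}) x y : zz s (x %% size s + y) = zz s (x + y).
Proof. by rewrite /zz modnDml. Qed.

Lemma zz_addn (V : finType) (s : seq {set V}) x c : zz s (x + size s * c) = zz s x.
Proof. by rewrite /zz addnC mulnC modnMDl. Qed.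

Lemma zz_nth (V : finType) (s : seq {set V}) i : i < size s -> zz s i = nth set0 s i.
Proof. by move=> lt; rewrite /zz modn_small. Qed.

Lemma nth_rot' (T : Type) (x0 : T) (s : seq T) k i : k <= size s -> i < size s ->
  nth x0 (rot k s) i = nth x0 s ((i + k) %% size s).
Proof.
move=> ks iS; rewrite /rot nth_cat size_drop.
case: ltnP => h.
  have hl : i + k < size s by lia.
  by rewrite nth_drop modn_small // addnC.
have hl : i - (size s - k) < k by lia.
rewrite nth_take //.
have E : i + k = (i - (size s - k)) + size s by lia.
rewrite E modnDr modn_small //. lia.
Qed.

Lemma zz_rot (V : finType) (s : seq {set V}) k y : k <= size s ->
  zz (rot k s) y = zz s (y + k).
Proof.
move=> ks; rewrite /zz size_rot.
case: (eqVneq s [::]) => [E|sn].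
  by rewrite E rot_oversize // !nth_nil.
have sp : 0 < size s by rewrite lt0n size_eq0.
rewrite nth_rot' //; last by rewrite ltn_pmod.
by rewrite modnDml.
Qed.

Lemma zz_state (V : finType) (F : {set {set V}}) (s : seq {set V}) i :
  tri3 F -> is_zigzag F s ->
  valid F (zz s i, zz s i.+1) /\ zz s i.+2 = nxt F (zz s i) (zz s i.+1).
Proof.
move=> HT [_ [Z1 Z2 Z3 Z4]].
have /andP[/eqP A2 _] := Z1 i.
have /andP[/eqP B2 _] := Z1 i.+1.
have /andP[/eqP C2 _] := Z1 i.+2.
have [AB [h1 h1F /andP[Ah1 Bh1]]] := Z2 i.
have [BC [h2 h2F /andP[Bh2 Ch2]]] := Z2 i.+1.
exact: (step HT A2 B2 C2 AB BC h1F Ah1 Bh1 h2F Bh2 Ch2 (Z3 _ _ _ h1F h2F Ah1 Bh1 Bh2 Ch2) (Z4 i)).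
Qed.

Lemma zz_back (V : finType) (F : {set {set V}}) (s : seq {set V}) i :
  tri3 F -> is_zigzag F s ->
  zz s i = nxt F (zz s i.+2) (zz s i.+1).
Proof.
move=> HT [_ [Z1 Z2 Z3 Z4]].
have /andP[/eqP A2 _] := Z1 i.
have /andP[/eqP B2 _] := Z1 i.+1.
have /andP[/eqP C2 _] := Z1 i.+2.
have [AB [h1 h1F /andP[Ah1 Bh1]]] := Z2 i.
have [BC [h2 h2F /andP[Bh2 Ch2]]] := Z2 i.+1.
have h12 := Z3 _ _ _ h1F h2F Ah1 Bh1 Bh2 Ch2.
have AB' : zz s i.+1 != zz s i by rewrite eq_sym.
have BC' : zz s i.+2 != zz s i.+1 by rewrite eq_sym.
have h12' : h2 != h1 by rewrite eq_sym.
have D : [disjoint zz s i.+2 & zz s i] by rewrite disjoint_sym; apply: Z4.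
by have [] := step HT C2 B2 A2 BC' AB' h2F Ch2 Bh2 h1F Bh1 Ah1 h12' D.
Qed.

Lemma zz_period (V : finType) (F : {set {set V}}) (s : seq {set V}) d :
  is_zigzag F s -> (forall x, zz s (x + d) = zz s x) -> size s %| d.
Proof.
move=> [[sp Hrot] _] Hd.
set n := size s in sp Hrot *.
have Hr : forall x, zz s (x + d %% n) = zz s x.
  by move=> x; rewrite -(Hd x) /zz modnDmr.
rewrite /dvdn; apply/negPn/negP => r0.
have r0' : 0 < d %% n by rewrite lt0n.
have Hk : 0 < d %% n < n by rewrite r0' ltn_pmod.
move/negP: (Hrot _ Hk); apply.
apply/eqP/(@eq_from_nth _ set0); first by rewrite size_rot.
move=> i; rewrite size_rot => iS.
rewrite nth_rot' //; last by apply: ltnW; rewrite ltn_pmod.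
by move: (Hr i); rewrite /zz -/n (modn_small iS).
Qed.


Lemma zig_pos (V : finType) (F : {set {set V}}) (s : seq {set V}) :
  is_zigzag F s -> 0 < size s.
Proof. by case=> [[]]. Qed.

Lemma same_fw (V : finType) (F : {set {set V}}) (s t : seq {set V}) i j :
  tri3 F -> is_zigzag F s -> is_zigzag F t ->
  zz s i = zz t j -> zz s i.+1 = zz t j.+1 ->
  forall k, zz s (i + k) = zz t (j + k).
Proof.
move=> HT Zs Zt E0 E1.
suff H : forall k, zz s (i + k) = zz t (j + k) /\ zz s (i + k).+1 = zz t (j + k).+1.
  by move=> k; case: (H k).
elim=> [|k [IH1 IH2]]; first by rewrite !addn0.
rewrite !addnS; split => //.
have [_ ->] := zz_state (i + k) HT Zs.
have [_ ->] := zz_state (j + k) HT Zt.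
by rewrite IH1 IH2.
Qed.

Lemma shift (V : finType) (F : {set {set V}}) (s t : seq {set V}) i j :
  tri3 F -> is_zigzag F s -> is_zigzag F t ->
  zz s i = zz t j -> zz s i.+1 = zz t j.+1 ->
  forall x, zz s x = zz t (x + (j + size s * i - i)).
Proof.
move=> HT Zs Zt E0 E1 x.
have sp := zig_pos Zs.
have le : i <= size s * i by rewrite leq_pmull.
rewrite -(zz_addn s x i).
have -> : x + size s * i = i + (x + size s * i - i) by lia.
rewrite (same_fw HT Zs Zt E0 E1).
congr zz; lia.
Qed.

Lemma uniq_fw (V : finType) (F : {set {set V}}) (s t : seq {set V}) i j :
  tri3 F -> is_zigzag F s -> is_zigzag F t ->
  zz s i = zz t j -> zz s i.+1 = zz t j.+1 ->
  size s = size t /\ exists m, rot m t = s.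
Proof.
move=> HT Zs Zt E0 E1.
have Sh := shift HT Zs Zt E0 E1.
have Sh' := shift HT Zt Zs (esym E0) (esym E1).
set d := j + size s * i - i in Sh.
set d' := i + size t * j - j in Sh'.
have D1 : size s %| size t.
  apply: (zz_period Zs) => x.
  by rewrite Sh (Sh x) addnAC -[size t]muln1 zz_addn.
have D2 : size t %| size s.
  apply: (zz_period Zt) => x.
  by rewrite Sh' (Sh' x) addnAC -[size s]muln1 zz_addn.
have Es : size s = size t by apply/eqP; rewrite eqn_dvd D1 D2.
split => //.
have tp := zig_pos Zt.
exists (d %% size t).
apply: (@eq_from_nth _ set0); first by rewrite size_rot Es.
move=> y; rewrite size_rot => yl.
rewrite nth_rot' //; last by apply: ltnW; rewrite ltn_pmod.
rewrite -[nth set0 s y]zz_nth ?Es // (Sh y).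
by rewrite /zz modnDmr.
Qed.

Lemma pos_uniq (V : finType) (F : {set {set V}}) (s : seq {set V}) p q :
  tri3 F -> is_zigzag F s ->
  zz s p = zz s q -> zz s p.+1 = zz s q.+1 -> p %% size s = q %% size s.
Proof.
move=> HT Zs.
have sp := zig_pos Zs.
suff H : forall p q, p < size s -> q < size s -> p <= q ->
    zz s p = zz s q -> zz s p.+1 = zz s q.+1 -> p = q.
  move=> E0 E1.
  have E0' : zz s (p %% size s) = zz s (q %% size s) by rewrite !zz_mod.
  have E1' : zz s (p %% size s).+1 = zz s (q %% size s).+1.
    by rewrite -[(p %% _).+1]addn1 -[(q %% _).+1]addn1 !zz_modD !addn1.
  have lp : p %% size s < size s by rewrite ltn_pmod.
  have lq : q %% size s < size s by rewrite ltn_pmod.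
  case: (leqP (p %% size s) (q %% size s)) => h.
    exact: H.
  by apply/esym; apply: H; rewrite ?E0' ?E1' //; apply: ltnW.
move=> {}p {}q lp lq pq E0 E1.
have Sh := shift HT Zs Zs E0 E1.
have Dv : size s %| q + size s * p - p.
  by apply: (zz_period Zs) => x; rewrite -Sh.
have E : q + size s * p - p = size s * p + (q - p).
  have : p <= size s * p by rewrite leq_pmull.
  move: (size s * p) => N. lia.
move: Dv; rewrite E dvdn_addr ?dvdn_mulr // => Dv.
have lt : q - p < size s by apply: leq_ltn_trans (leq_subr p q) lq.
case: (posnP (q - p)) => [h0|h].
  by apply/eqP; rewrite eqn_leq pq /= -subn_eq0 h0.
by move: (dvdn_leq h Dv); rewrite leqNgt lt.
Qed.


Lemma ar1 c i y : y <= c -> i.+1 + c * (y + i.+2) = (c.+1 - y.+1) + c.+1 * (y + i.+1).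
Proof. move=> h. nia. Qed.

Lemma rev_rel (V : finType) (F : {set {set V}}) (s t : seq {set V}) i j :
  tri3 F -> is_zigzag F s -> is_zigzag F t ->
  zz s i = zz t j.+1 -> zz s i.+1 = zz t j ->
  forall k, zz t (j + k) = zz s (i.+1 + (size s).-1 * k).
Proof.
move=> HT Zs Zt E0 E1.
have sp := zig_pos Zs.
set c := (size s).-1.
have cn : c.+1 = size s by rewrite /c prednK.
suff H : forall k, zz t (j + k) = zz s (i.+1 + c * k) /\
                   zz t (j + k.+1) = zz s (i.+1 + c * k.+1).
  by move=> k; case: (H k).
elim=> [|k [IH1 IH2]].
  rewrite addn0 muln0 addn0 -E1; split => //.
  rewrite addn1 -E0 muln1 -(zz_addn s i 1).
  congr zz; rewrite -cn; lia.
split => //.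
have -> : j + k.+2 = (j + k).+2 by rewrite !addnS.
have [_ ->] := zz_state (j + k) HT Zt.
rewrite IH1 -addnS IH2.
rewrite (zz_back (i.+1 + c * k.+2) HT Zs).
congr nxt.
  rewrite -(zz_addn s (i.+1 + c * k) 2).
  congr zz; rewrite -cn !mulnS; lia.
rewrite -(zz_addn s (i.+1 + c * k.+1) 1).
congr zz; rewrite -cn !mulnS; lia.
Qed.

Lemma rev_div (V : finType) (F : {set {set V}}) (s t : seq {set V}) i j :
  tri3 F -> is_zigzag F s -> is_zigzag F t ->
  zz s i = zz t j.+1 -> zz s i.+1 = zz t j -> size t %| size s.
Proof.
move=> HT Zs Zt E0 E1.
have R := rev_rel HT Zs Zt E0 E1.
apply: (zz_period Zt) => x.
have le : j <= size t * j by rewrite leq_pmull // (zig_pos Zt).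
set K := x + size t * j - j.
rewrite -(zz_addn t (x + size s) j).
have -> : x + size s + size t * j = j + (K + size s) by rewrite /K; lia.
rewrite R mulnDr addnA [_ * size s]mulnC zz_addn -R.
rewrite -(zz_addn t x j); congr zz; rewrite /K; lia.
Qed.

Lemma zrev_rot (V : finType) (F : {set {set V}}) (s t : seq {set V}) i j :
  tri3 F -> is_zigzag F s -> is_zigzag F t ->
  zz s i = zz t j.+1 -> zz s i.+1 = zz t j -> exists m, rot m t = rev s.
Proof.
move=> HT Zs Zt E0 E1.
have R := rev_rel HT Zs Zt E0 E1.
have D1 := rev_div HT Zs Zt E0 E1.
have D2 := rev_div HT Zt Zs (esym E1) (esym E0).
have Es : size s = size t by apply/eqP; rewrite eqn_dvd D1 D2.
have sp := zig_pos Zs.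
exists ((j + i.+2) %% size t).
apply: (@eq_from_nth _ set0); first by rewrite size_rot size_rev Es.
move=> y; rewrite size_rot => yl.
rewrite nth_rot' //; last by apply: ltnW; rewrite ltn_pmod // -Es.
rewrite nth_rev ?Es //.
have -> : nth set0 t ((y + (j + i.+2) %% size t) %% size t) = zz t (j + (y + i.+2)).
  by rewrite /zz modnDmr; congr nth; congr modn; lia.
rewrite R.
have cn : (size s).-1.+1 = size s by rewrite prednK.
rewrite ar1; last by rewrite -ltnS cn Es.
rewrite cn zz_addn -Es zz_nth //.
rewrite -Es in yl; lia.
Qed.


Definition phi (V : finType) (F : {set {set V}}) (p : {set V} * {set V}) :=
  if valid F p then (p.2, nxt F p.1 p.2) else p.

Lemma phi_inj (V : finType) (F : {set {set V}}) : tri3 F -> injective (phi F).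
Proof.
move=> HT [p1 p2] [q1 q2]; rewrite /phi /=.
case vp: (valid F (p1, p2)); case vq: (valid F (q1, q2)).
- case=> E2 E3.
  have [_ _ _ Ep] := valid_nxt HT vp.
  have [_ _ _ Eq] := valid_nxt HT vq.
  by rewrite -Ep -Eq E3 E2.
- move=> E; have [V1 _ _ _] := valid_nxt HT vp.
  by move: V1; rewrite E vq.
- move=> E; have [V1 _ _ _] := valid_nxt HT vq.
  by move: V1; rewrite -E vp.
- by [].
Qed.

Lemma iter_valid (V : finType) (F : {set {set V}}) p : tri3 F -> valid F p ->
  forall i, valid F (iter i (phi F) p).
Proof.
move=> HT vp; elim=> [|i IH] //=.
rewrite {1}/phi IH.
by have [] := valid_nxt HT (_ : valid F ((iter i (phi F) p).1, (iter i (phi F) p).2)); first by case: (iter i (phi F) p) IH.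
Qed.

Definition zseq (V : finType) (F : {set {set V}}) (p : {set V} * {set V}) :=
  map fst (orbit (phi F) p).

Lemma iter_mod (V : finType) (F : {set {set V}}) p i : tri3 F ->
  iter (i %% order (phi F) p) (phi F) p = iter i (phi F) p.
Proof.
move=> HT.
have inj := phi_inj HT.
set o := order (phi F) p.
have Hq : forall q, iter (q * o) (phi F) p = p.
  elim=> [|q IH] //=; by rewrite mulSn iterD IH iter_order.
by rewrite {2}(divn_eq i o) addnC iterD Hq.
Qed.

Lemma zseq_zz (V : finType) (F : {set {set V}}) p i : tri3 F ->
  zz (zseq F p) i = (iter i (phi F) p).1.
Proof.
move=> HT.
have op := order_gt0 (phi F) p.
rewrite /zz /zseq size_map size_traject (nth_map p); last by rewrite size_traject ltn_pmod.
by rewrite nth_traject ?ltn_pmod // iter_mod.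
Qed.

Lemma iter_fst (V : finType) (F : {set {set V}}) p i : tri3 F -> valid F p ->
  (iter i.+1 (phi F) p).1 = (iter i (phi F) p).2 /\
  (iter i.+2 (phi F) p).1 = nxt F (iter i (phi F) p).1 (iter i (phi F) p).2.
Proof.
move=> HT vp.
have V0 := iter_valid HT vp i.
have V1 := iter_valid HT vp i.+1.
rewrite [iter i.+2 _ _]iterS [iter i.+1 _ _]iterS /phi V1 /=.
by rewrite /phi V0.
Qed.

Lemma zseq_zigzag (V : finType) (F : {set {set V}}) p : tri3 F -> valid F p ->
  is_zigzag F (zseq F p).
Proof.
move=> HT vp.
have [H3 H2] := HT.
set s := zseq F p.
have Zi : forall i, [/\ zz s i = (iter i (phi F) p).1,
    zz s i.+1 = (iter i (phi F) p).2 &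
    zz s i.+2 = nxt F (iter i (phi F) p).1 (iter i (phi F) p).2].
  move=> i; have [A B] := iter_fst i HT vp.
  by rewrite !zseq_zz // A B.
have op := order_gt0 (phi F) p.
have sz : size s = order (phi F) p by rewrite size_map size_traject.
split.
  split; first by rewrite sz.
  move=> k /andP[k0 kl]; apply/negP => /eqP Er.
  have Hk : forall x, zz s (x + k) = zz s x.
    by move=> x; rewrite -zz_rot ?Er // ltnW.
  have Ep : iter k (phi F) p = p.
    have [A B _] := Zi k; have [A0 B0 _] := Zi 0.
    have H0 := Hk 0; have H1 := Hk 1.
    rewrite add0n in H0; rewrite add1n in H1.
    by rewrite [LHS]surjective_pairing [RHS]surjective_pairing -A -B -A0 -B0 H0 H1.
  have U := orbit_uniq (phi F) p.
  have l0 : 0 < size (orbit (phi F) p) by rewrite size_traject.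
  have lk : k < size (orbit (phi F) p) by rewrite size_traject -sz.
  have kl' : k < order (phi F) p by rewrite -sz.
  have := nth_uniq p l0 lk U.
  rewrite /orbit !nth_traject // Ep eqxx.
  by move/esym/eqP => k0'; rewrite -k0' in k0.
have VV := iter_valid HT vp.
split.
- move=> i; have [A _ _] := Zi i; rewrite A.
  have /and4P[/eqP a2 _ _ aF] := VV i.
  rewrite /is_edge a2 eqxx /=; apply/existsP; exists ((iter i (phi F) p).1 :|: (iter i (phi F) p).2).
  by rewrite aF subsetUl.
- move=> i; have [A B _] := Zi i; rewrite A B.
  have /and4P[_ _ ab aF] := VV i; split => //.
  by exists ((iter i (phi F) p).1 :|: (iter i (phi F) p).2); rewrite // subsetUl subsetUr.
- move=> i f g fF gF; have [A B C] := Zi i; rewrite A B C.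
  have Vi := VV i.
  move: (Vi) => /and4P[/eqP a2 /eqP b2 ab aF].
  have [Vn _ Eo _] := valid_nxt HT Vi.
  move: (Vn) => /and4P[_ /eqP n2 bn bF].
  move=> af bf bg ng.
  have [Uf _] := two_in_three (H3 _ fF) af bf a2 b2 ab.
  have [Ug _] := two_in_three (H3 _ gF) bg ng b2 n2 bn.
  have [_ _ go _] := oth_spec HT aF (subsetUr _ _) b2.
  by rewrite -Uf -Ug Eo eq_sym.
- move=> i; have [A _ C] := Zi i; rewrite A C.
  by have [_ D _ _] := valid_nxt HT (VV i).
Qed.


Definition Pres (V : finType) (tau : seq (seq {set V})) (u w : {set V}) : Prop :=
  exists2 t, t \in tau & exists i, zz t i = u /\ zz t i.+1 = w.

Lemma pres_excl (V : finType) (F : {set {set V}}) tau u w : tri3 F ->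
  z_orientation F tau -> Pres tau u w -> Pres tau w u -> False.
Proof.
move=> HT [Z1 _ Z3] [s sT [i [E0 E1]]] [t tT [j [E2 E3]]].
have Zs := Z1 _ sT; have Zt := Z1 _ tT.
have [m Em] := zrev_rot HT Zs Zt (etrans E0 (esym E3)) (etrans E1 (esym E2)).
case: (Z3 _ Zs) => [[_ nR]|[nS _]].
  by apply: nR; exists t => //; exists m.
by apply: nS; exists s => //; exists 0; rewrite rot0.
Qed.

Lemma zz_rot' (V : finType) (s t : seq {set V}) k : rot k t = s ->
  exists2 k', k' <= size t & forall x, zz s x = zz t (x + k').
Proof.
move=> E; exists (minn k (size t)); first exact: geq_minr.
by move=> x; rewrite -E rot_minn zz_rot // geq_minr.
Qed.

Lemma pres_tot (V : finType) (F : {set {set V}}) tau u w : tri3 F ->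
  z_orientation F tau -> valid F (u, w) -> Pres tau u w \/ Pres tau w u.
Proof.
move=> HT [Z1 _ Z3] vp.
have Zs := zseq_zigzag HT vp.
set s := zseq F (u, w) in Zs.
have S0 : zz s 0 = u by rewrite zseq_zz.
have S1 : zz s 1 = w by rewrite zseq_zz //= /phi vp.
have sp := zig_pos Zs.
have s2 : 1 < size s.
  rewrite ltn_neqAle sp andbT; apply/negP => /eqP s1.
  move: vp => /and4P[_ _ /negP uw _]; apply: uw.
  by rewrite -S0 -S1 /zz -s1.
case: (Z3 _ Zs) => [[[t tT [k0 Et]] _]|[_ [t tT [k0 Et]]]].
  case: (zz_rot' Et) => k _ Hk.
  left; exists t => //; exists k.
  have H0 := Hk 0; have H1 := Hk 1.
  rewrite add0n in H0; rewrite add1n in H1.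
  by rewrite -H0 -H1.
case: (zz_rot' Et) => k _ Hk.
right; exists t => //; exists ((size s).-2 + k).
rewrite -Hk -addSn -Hk.
have n2 : (size s).-2 < size (rev s) by rewrite size_rev; lia.
have n1 : (size s).-2.+1 < size (rev s) by rewrite size_rev; lia.
rewrite !zz_nth // !nth_rev; try by rewrite size_rev in n2 n1.
have -> : size s - (size s).-2.+1 = 1 by lia.
have -> : size s - (size s).-2.+2 = 0 by lia.
by rewrite -S0 -S1 !zz_nth.
Qed.


Definition occs (V : finType) (tau : seq (seq {set V})) (e : {set V}) :=
  flatten [seq [seq (s, i) | i <- [seq i <- iota 0 (size s) | nth set0 s i == e]] | s <- tau].

Lemma passages_occs (V : finType) (tau : seq (seq {set V})) (e : {set V}) :
  passages tau e = map (fun o => passage_dir o.1 o.2) (occs tau e).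
Proof.
rewrite /passages /occs map_flatten -map_comp; congr flatten; apply: eq_map => s /=.
by rewrite -map_comp.
Qed.

Lemma mem_occs (V : finType) (tau : seq (seq {set V})) (e : {set V}) s i :
  ((s, i) \in occs tau e) = [&& s \in tau, i < size s & nth set0 s i == e].
Proof.
apply/idP/idP.
  case/flatten_mapP => t tT /mapP [j]; rewrite mem_filter mem_iota add0n leq0n /= => /andP[je jl] [-> ->].
  by rewrite tT jl je.
case/and3P => sT il ie; apply/flatten_mapP; exists s => //.
by apply/mapP; exists i => //; rewrite mem_filter mem_iota ie add0n leq0n il.
Qed.

Lemma uniq_occs (V : finType) (tau : seq (seq {set V})) (e : {set V}) :
  uniq tau -> uniq (occs tau e).
Proof.
elim: tau => [|s tau IH] //= /andP[sn ut].
rewrite cat_uniq IH // andbT; apply/andP; split.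
  rewrite map_inj_uniq; first by rewrite filter_uniq // iota_uniq.
  by move=> a b [].
apply/hasPn => [[t j]] /flatten_mapP [t' t'T /mapP [k _ [Et _]]].
apply/mapP => [[k' _ [Et' _]]].
by move: sn; rewrite -Et' Et t'T.
Qed.

Lemma uniq_tau (V : finType) (F : {set {set V}}) tau :
  z_orientation F tau -> uniq tau.
Proof.
move=> [_ Z2 _]; apply/(uniqP [::]) => a b al bl E.
apply/eqP; apply/negP => /negP ab.
by apply: (Z2 a b al bl ab); exists 0; rewrite rot0.
Qed.

Lemma tau_eq (V : finType) (F : {set {set V}}) tau s t m :
  z_orientation F tau -> s \in tau -> t \in tau -> rot m t = s -> s = t.
Proof.
move=> [Z1 Z2 Z3] sT tT E.
apply/eqP; apply/negP => /negP st.
have ne : index t tau != index s tau.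
  by apply: contra st => /eqP H; rewrite -(nth_index [::] sT) -(nth_index [::] tT) H.
have ls : index s tau < size tau by rewrite index_mem.
have lt : index t tau < size tau by rewrite index_mem.
apply: (Z2 _ _ lt ls ne).
by rewrite !nth_index //; exists m.
Qed.


Lemma occ_info (V : finType) (F : {set {set V}}) tau e s i :
  tri3 F -> z_orientation F tau -> (s, i) \in occs tau e ->
  let N := zz s i.+1 in let P := zz s (i + (size s).-1) in
  [/\ s \in tau, is_zigzag F s, zz s i = e, i < size s &
   [/\ zz s (i + (size s).-1).+1 = e, valid F (e, N), valid F (P, e),
       P :|: e != e :|: N & [disjoint P & N]]].
Proof.
move=> HT [Z1 _ _]; rewrite mem_occs => /and3P[sT il /eqP ie] N P.
have Zs := Z1 _ sT.
have sp := zig_pos Zs.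
have ze : zz s i = e by rewrite zz_nth.
have E1 : zz s (i + (size s).-1).+1 = e.
  by rewrite -ze -(zz_addn s i 1); congr zz; rewrite muln1 -addnS prednK.
have E2 : zz s (i + (size s).-1).+2 = N.
  by rewrite /N -(zz_addn s i.+1 1); congr zz; rewrite muln1 -addnS prednK // addSn.
have [V1 _] := zz_state i HT Zs.
have [V2 _] := zz_state (i + (size s).-1) HT Zs.
rewrite ze in V1; rewrite E1 in V2.
split => //; split => //.
  move: Zs => [_ [_ _ Z3 _]].
  have := Z3 (i + (size s).-1) (P :|: e) (e :|: N).
  rewrite E1 E2; apply.
  - by case/and4P: V2.
  - by case/and4P: V1.
  - exact: subsetUl.
  - exact: subsetUr.
  - exact: subsetUl.
  - exact: subsetUr.
move: Zs => [_ [_ _ _ Z4]].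
by have := Z4 (i + (size s).-1); rewrite E2.
Qed.

Lemma pd_occ (V : finType) (F : {set {set V}}) tau e s i :
  tri3 F -> z_orientation F tau -> (s, i) \in occs tau e ->
  let N := zz s i.+1 in let P := zz s (i + (size s).-1) in
  passage_dir s i = (e :\: N, e :&: N) /\ passage_dir s i = (P :&: e, e :\: P).
Proof.
move=> HT Hz o N P.
have [H3 _] := HT.
have [_ _ ze _ [_ V1 V2 _ D]] := occ_info HT Hz o.
rewrite /passage_dir ze -/N -/P.
move: V1 V2 => /and4P[/= /eqP e2 /eqP n2 en eF] /and4P[/= /eqP p2 _ pe pF].
have [_ I1] := two_in_three (H3 _ eF) (subsetUl _ _) (subsetUr _ _) e2 n2 en.
have [_ I2] := two_in_three (H3 _ pF) (subsetUl _ _) (subsetUr _ _) p2 e2 pe.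
have key : forall A B C : {set V}, #|A| = 2 -> #|A :&: B| = 1 -> #|C :&: A| = 1 ->
    [disjoint C & B] -> A :&: B = A :\: C.
  move=> A B C A2 AB1 CA1 dCB.
  apply/eqP; rewrite eqEcard; apply/andP; split.
    apply/subsetP => z; rewrite !inE => /andP[zA zB]; rewrite zA andbT.
    by apply/negP => zC; move: dCB => /pred0P /(_ z) /=; rewrite zC zB.
  by rewrite cardsD A2 setIC CA1 AB1.
have K1 : P :&: e = e :\: N.
  rewrite setIC; apply: key => //; try by rewrite setIC.
  by rewrite disjoint_sym.
have K2 : e :&: N = e :\: P by apply: key => //; rewrite setIC.
by rewrite K1 K2.
Qed.


Definition Rel (V : finType) (o : seq {set V} * nat) (x : {set V}) :=
  zz o.1 o.2.+1 = x \/ zz o.1 (o.2 + (size o.1).-1) = x.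

Lemma occ_exists (V : finType) (F : {set {set V}}) tau (f e x : {set V}) :
  tri3 F -> z_orientation F tau -> f \in F -> e \subset f -> x \subset f ->
  #|e| = 2 -> #|x| = 2 -> e != x ->
  exists2 o, o \in occs tau e & Rel o x.
Proof.
move=> HT Hz fF ef xf e2 x2 ex.
have [H3 _] := HT.
have [U _] := two_in_three (H3 _ fF) ef xf e2 x2 ex.
have vp : valid F (e, x) by rewrite /valid /= e2 x2 ex U fF.
have [Z1 _ _] := Hz.
case: (pres_tot HT Hz vp) => [[t tT [i [E0 E1]]]|[t tT [i [E0 E1]]]].
  have tp := zig_pos (Z1 _ tT).
  exists (t, i %% size t).
    by rewrite mem_occs tT ltn_pmod //= -E0.
  by left; rewrite /= -E1 -addn1 zz_modD addn1.
have tp := zig_pos (Z1 _ tT).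
exists (t, i.+1 %% size t).
  by rewrite mem_occs tT ltn_pmod //= -E1.
right; rewrite /= zz_modD -E0 -(zz_addn t i 1); congr zz.
by rewrite muln1 addSn -addnS prednK.
Qed.

Lemma occ_pres (V : finType) (F : {set {set V}}) tau e x s i :
  tri3 F -> z_orientation F tau -> (s, i) \in occs tau e ->
  (zz s i.+1 = x -> Pres tau e x) /\ (zz s (i + (size s).-1) = x -> Pres tau x e).
Proof.
move=> HT Hz o.
have [sT _ ze _ [E1 _ _ _ _]] := occ_info HT Hz o.
split => H.
  by exists s => //; exists i.
by exists s => //; exists (i + (size s).-1).
Qed.

Lemma occ_unique (V : finType) (F : {set {set V}}) tau e x o o' :
  tri3 F -> z_orientation F tau -> o \in occs tau e -> o' \in occs tau e ->
  Rel o x -> Rel o' x -> o = o'.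
Proof.
case: o => s i; case: o' => s' i' HT Hz o o'.
have [sT Zs ze il [E1 _ _ _ _]] := occ_info HT Hz o.
have [sT' Zs' ze' il' [E1' _ _ _ _]] := occ_info HT Hz o'.
have [Pn Pp] := occ_pres x HT Hz o.
have [Pn' Pp'] := occ_pres x HT Hz o'.
have sp := zig_pos Zs.
case=> /= R; case=> /= R'.
- have [_ [m Em]] := uniq_fw HT Zs Zs' (etrans ze (esym ze')) (etrans R (esym R')).
  have Es := tau_eq Hz sT sT' Em; subst s'.
  have := pos_uniq HT Zs (etrans ze (esym ze')) (etrans R (esym R')).
  by rewrite !modn_small // => ->.
- by case: (pres_excl HT Hz (Pn R) (Pp' R')).
- by case: (pres_excl HT Hz (Pn' R') (Pp R)).
- have [_ [m Em]] := uniq_fw HT Zs Zs' (etrans R (esym R')) (etrans E1 (esym E1')).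
  have Es := tau_eq Hz sT sT' Em; subst s'.
  have := pos_uniq HT Zs (etrans R (esym R')) (etrans E1 (esym E1')).
  move=> H.
  have : (i + (size s).-1).+1 %% size s = (i' + (size s).-1).+1 %% size s.
    by rewrite -[(i + (size s).-1).+1]addn1 -[(i' + (size s).-1).+1]addn1 -modnDml H modnDml.
  rewrite -!addnS !prednK // !modnDr !modn_small //.
  by move=> ->.
Qed.


Lemma occ_cover (V : finType) (F : {set {set V}}) tau (f e x1 x2 : {set V}) o :
  tri3 F -> z_orientation F tau -> f \in F -> e \subset f -> #|e| = 2 ->
  (forall y : {set V}, y \subset f -> #|y| = 2 -> [\/ y = e, y = x1 | y = x2]) ->
  o \in occs tau e -> Rel o x1 \/ Rel o x2.
Proof.
case: o => s i HT Hz fF ef e2 Hsub o.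
have [_ _ _ _ [E1 V1 V2 PN _]] := occ_info HT Hz o.
set N := zz s i.+1 in V1 PN *; set P := zz s (i + (size s).-1) in V2 PN *.
move: V1 V2 => /and4P[_ /= /eqP n2 en eF] /and4P[/= /eqP p2 _ pe pF].
case Nf: (N \subset f).
  case: (Hsub _ Nf n2) => [E|E|E].
  - by move: en; rewrite E eqxx.
  - by left; left.
  - by right; left.
case Pf: (P \subset f).
  case: (Hsub _ Pf p2) => [E|E|E].
  - by move: pe; rewrite E eqxx.
  - by left; right.
  - by right; right.
have [_ _ _ Hu] := oth_spec HT fF ef e2.
have A1 : e :|: N = oth F f e.
  apply: Hu => //; first exact: subsetUl.
  by apply/negP => /eqP E; move: Nf; rewrite -E subsetUr.
have A2 : P :|: e = oth F f e.
  apply: Hu => //; first exact: subsetUr.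
  by apply/negP => /eqP E; move: Pf; rewrite -E subsetUl.
by move: PN; rewrite A1 A2 eqxx.
Qed.

Lemma occ_two (V : finType) (F : {set {set V}}) tau (f e x1 x2 : {set V}) o :
  tri3 F -> z_orientation F tau -> f \in F -> e \subset f -> x1 \subset f ->
  x2 \subset f -> #|e| = 2 -> x1 != x2 ->
  o \in occs tau e -> Rel o x1 -> Rel o x2 -> False.
Proof.
case: o => s i HT Hz fF ef x1f x2f e2 x12 o.
have [H3 _] := HT.
have [_ _ _ _ [E1 V1 V2 PN _]] := occ_info HT Hz o.
set N := zz s i.+1 in V1 PN *; set P := zz s (i + (size s).-1) in V2 PN *.
move: V1 V2 => /and4P[_ /= /eqP n2 en eF] /and4P[/= /eqP p2 _ pe pF].
case=> /= R1; case=> /= R2.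
- by move: x12; rewrite -R1 -R2 eqxx.
- have Nf : N \subset f by rewrite /N R1.
  have Pf : P \subset f by rewrite /P R2.
  have [U1 _] := two_in_three (H3 _ fF) ef Nf e2 n2 en.
  have [U2 _] := two_in_three (H3 _ fF) Pf ef p2 e2 pe.
  by move: PN; rewrite U1 U2 eqxx.
- have Nf : N \subset f by rewrite /N R2.
  have Pf : P \subset f by rewrite /P R1.
  have [U1 _] := two_in_three (H3 _ fF) ef Nf e2 n2 en.
  have [U2 _] := two_in_three (H3 _ fF) Pf ef p2 e2 pe.
  by move: PN; rewrite U1 U2 eqxx.
- by move: x12; rewrite -R1 -R2 eqxx.
Qed.

Lemma occ_dir (V : finType) (F : {set {set V}}) tau (e x : {set V}) o :
  tri3 F -> z_orientation F tau -> o \in occs tau e -> Rel o x ->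
  (Pres tau e x -> passage_dir o.1 o.2 = (e :\: x, e :&: x)) /\
  (Pres tau x e -> passage_dir o.1 o.2 = (x :&: e, e :\: x)).
Proof.
case: o => s i HT Hz o /=.
have [Pn Pp] := occ_pres x HT Hz o.
have [D1 D2] := pd_occ HT Hz o.
case=> /= R.
  split => H; first by rewrite D1 R.
  by case: (pres_excl HT Hz (Pn R) H).
split => H; last by rewrite D2 R.
by case: (pres_excl HT Hz H (Pp R)).
Qed.

Lemma edge_pass (V : finType) (F : {set {set V}}) tau (f e x1 x2 : {set V}) :
  tri3 F -> z_orientation F tau -> f \in F -> e \subset f -> x1 \subset f ->
  x2 \subset f -> #|e| = 2 -> #|x1| = 2 -> #|x2| = 2 ->
  e != x1 -> e != x2 -> x1 != x2 ->
  (forall y : {set V}, y \subset f -> #|y| = 2 -> [\/ y = e, y = x1 | y = x2]) ->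
  exists d1, exists d2, perm_eq (passages tau e) [:: d1; d2] /\
  [/\ Pres tau e x1 -> d1 = (e :\: x1, e :&: x1),
      Pres tau x1 e -> d1 = (x1 :&: e, e :\: x1),
      Pres tau e x2 -> d2 = (e :\: x2, e :&: x2) &
      Pres tau x2 e -> d2 = (x2 :&: e, e :\: x2)].
Proof.
move=> HT Hz fF ef x1f x2f e2 x12' x22 ex1 ex2 x12 Hsub.
have [o1 o1O R1] := occ_exists HT Hz fF ef x1f e2 x12' ex1.
have [o2 o2O R2] := occ_exists HT Hz fF ef x2f e2 x22 ex2.
have n12 : o1 != o2.
  apply/negP => /eqP E; subst o2.
  exact: (occ_two HT Hz fF ef x1f x2f e2 x12 o1O R1 R2).
have Pm : perm_eq (occs tau e) [:: o1; o2].
  apply: uniq_perm.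
  - exact: uniq_occs (uniq_tau Hz).
  - by rewrite /= inE n12.
  move=> o; apply/idP/idP.
    move=> oO; rewrite !inE.
    case: (occ_cover HT Hz fF ef e2 Hsub oO) => R.
      by rewrite (occ_unique HT Hz oO o1O R R1) eqxx.
    by rewrite (occ_unique HT Hz oO o2O R R2) eqxx orbT.
  by rewrite !inE => /orP[] /eqP ->.
exists (passage_dir o1.1 o1.2), (passage_dir o2.1 o2.2); split.
  by rewrite passages_occs; apply: (perm_map (fun o => passage_dir o.1 o.2) Pm).
have [A1 B1] := occ_dir HT Hz o1O R1.
have [A2 B2] := occ_dir HT Hz o2O R2.
by split.
Qed.


Ltac ev3 uv vu vw wv uw wu :=
  rewrite ?eqxx ?(negbTE uv) ?(negbTE vu) ?(negbTE vw) ?(negbTE wv) ?(negbTE uw) ?(negbTE wu) /=.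

Ltac pt3 u v w uv vu vw wv uw wu :=
  let z := fresh "z" in
  apply/setP => z; rewrite !inE;
  case: (eqVneq z u) => [?|?]; [subst z; ev3 uv vu vw wv uw wu |
  case: (eqVneq z v) => [?|?]; [subst z; ev3 uv vu vw wv uw wu |
  case: (eqVneq z w) => [?|?]; [subst z; ev3 uv vu vw wv uw wu |
  repeat match goal with H : is_true (z != _) |- _ => rewrite (negbTE H); clear H end ]]];
  try done.

Lemma sets3 (V : finType) (u v w : V) : u != v -> v != w -> u != w ->
  [/\ [set u; v] :\: [set v; w] = [set u], [set u; v] :&: [set v; w] = [set v],
      [set v; w] :&: [set u; v] = [set v], [set u; v] :\: [set w; u] = [set v] &
      [/\ [set u; v] :&: [set w; u] = [set u], [set w; u] :&: [set u; v] = [set u],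
       [set u; v] :|: [set v; w] = [set u; v; w], [set v; w] :|: [set w; u] = [set u; v; w] &
       [set w; u] :|: [set u; v] = [set u; v; w]]].
Proof.
move=> uv vw uw.
have vu : v != u by rewrite eq_sym.
have wv : w != v by rewrite eq_sym.
have wu : w != u by rewrite eq_sym.
split; try split; pt3 u v w uv vu vw wv uw wu.
Qed.

Lemma sub3 (V : finType) (u v w : V) (y : {set V}) : u != v -> v != w -> u != w ->
  y \subset [set u; v; w] -> #|y| = 2 ->
  [\/ y = [set u; v], y = [set v; w] | y = [set w; u]].
Proof.
move=> uv vw uw yf /eqP/cards2P [p [q [pq E]]]; subst y.
have pf : p \in [set u; v; w] by apply: (subsetP yf); rewrite !inE eqxx.
have qf : q \in [set u; v; w] by apply: (subsetP yf); rewrite !inE eqxx orbT.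
move: pf qf pq; rewrite !inE -?orbA => /or3P[]/eqP-> /or3P[]/eqP->; rewrite ?eqxx // => _.
all: first [ by constructor 1 | by constructor 2 | by constructor 3
  | by constructor 1; rewrite setUC | by constructor 2; rewrite setUC
  | by constructor 3; rewrite setUC ].
Qed.

Lemma edge3 (V : finType) (F : {set {set V}}) tau (u v w : V) :
  tri3 F -> z_orientation F tau -> u != v -> v != w -> u != w ->
  [set u; v; w] \in F ->
  exists d1, exists d2, perm_eq (passages tau [set u; v]) [:: d1; d2] /\
  [/\ Pres tau [set u; v] [set v; w] -> d1 = ([set u], [set v]),
      Pres tau [set v; w] [set u; v] -> d1 = ([set v], [set u]),
      Pres tau [set u; v] [set w; u] -> d2 = ([set v], [set u]) &
      Pres tau [set w; u] [set u; v] -> d2 = ([set u], [set v])].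
Proof.
move=> HT Hz uv vw uw fF.
have [S1 S2 S3 S4 [S5 S6 U1 U2 U3]] := sets3 uv vw uw.
have e2 : forall p q : V, p != q -> #|[set p; q]| = 2 by move=> p q pq; rewrite cards2 pq.
have vu : v != u by rewrite eq_sym.
have wu : w != u by rewrite eq_sym.
have ef : [set u; v] \subset [set u; v; w] by rewrite -U1 subsetUl.
have x1f : [set v; w] \subset [set u; v; w] by rewrite -U1 subsetUr.
have x2f : [set w; u] \subset [set u; v; w] by rewrite -U3 subsetUl.
have ne : forall A B : {set V}, forall z, z \in A -> z \notin B -> A != B.
  by move=> A B z zA zB; apply/negP => /eqP E; move: zB; rewrite -E zA.
have n1 : [set u; v] != [set v; w] by apply: (ne _ _ u); rewrite !inE ?eqxx // negb_or uv uw.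
have n2 : [set u; v] != [set w; u] by apply: (ne _ _ v); rewrite !inE ?eqxx ?orbT // negb_or vw vu.
have n3 : [set v; w] != [set w; u] by apply: (ne _ _ v); rewrite !inE ?eqxx // negb_or vw vu.
have [d1 [d2 [Pm [A1 B1 A2 B2]]]] :=
  edge_pass HT Hz fF ef x1f x2f (e2 _ _ uv) (e2 _ _ vw) (e2 _ _ wu) n1 n2 n3
    (fun y yf y2 => sub3 uv vw uw yf y2).
exists d1, d2; split => //; split.
- by move/A1 => ->; rewrite S1 S2.
- by move/B1 => ->; rewrite S3 S1.
- by move/A2 => ->; rewrite S4 S5.
- by move/B2 => ->; rewrite S6 S4.
Qed.


Lemma perm2 (T : eqType) (L : seq T) x y :
  perm_eq L [:: x; y] -> L = [:: x; y] \/ L = [:: y; x].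
Proof.
move=> P; have sz := perm_size P.
case: L P sz => [|a [|b [|]]] // P _.
case: (eqVneq a x) => [E|ax].
  subst a; left; move: P; rewrite perm_cons => /perm_small_eq -> //.
have ay : a = y.
  have : a \in [:: x; y] by rewrite -(perm_mem P) mem_head.
  by rewrite !inE (negbTE ax) /= => /eqP.
subst a; right.
have Q : perm_eq [:: x; y] [:: y; x] by apply/permP => p /=; rewrite addnCA.
have := perm_trans P Q; rewrite perm_cons => /perm_small_eq -> //.
Qed.

Lemma mkII (V : finType) tau (e : {set V}) x y d1 d2 :
  perm_eq (passages tau e) [:: d1; d2] -> d1 = ([set x], [set y]) ->
  d2 = ([set x], [set y]) -> typeII_dir tau e x y.
Proof. by move=> P E1 E2; subst; rewrite /typeII_dir; case: (perm2 P) => ->. Qed.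

Lemma mkI (V : finType) tau (e : {set V}) x y d1 d2 :
  perm_eq (passages tau e) [:: d1; d2] -> d1 = ([set x], [set y]) ->
  d2 = ([set y], [set x]) -> typeI tau e.
Proof.
move=> P E1 E2; subst; rewrite /typeI; case: (perm2 P) => ->; first by exists x, y.
by exists y, x.
Qed.

Lemma noI (V : finType) tau (e : {set V}) x y d1 d2 :
  perm_eq (passages tau e) [:: d1; d2] -> d1 = ([set x], [set y]) ->
  d2 = ([set x], [set y]) -> x != y -> ~ typeI tau e.
Proof.
move=> P E1 E2 xy [x' [y' H]].
have := mkII P E1 E2; rewrite /typeII_dir H => -[A B C D].
move/negP: xy; apply; apply/eqP/set1_inj; congruence.
Qed.

Lemma noII (V : finType) tau (e : {set V}) x y d1 d2 :
  perm_eq (passages tau e) [:: d1; d2] -> d1 = ([set x], [set y]) ->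
  d2 = ([set y], [set x]) -> x != y -> ~ typeII tau e.
Proof.
move=> P E1 E2 xy [x' [y' H]]; subst.
move/negP: xy; apply; apply/eqP/set1_inj.
by case: (perm2 P); rewrite H => -[A B C D]; congruence.
Qed.

Lemma sub2 (V : finType) (a b c : V) : [set a; b] \subset [set a; b; c].
Proof. by apply/subsetP => z; rewrite !inE => /orP[] ->; rewrite ?orbT. Qed.

Lemma concludeI (V : finType) tau (f : {set V}) a b c :
  f = [set a; b; c] -> a != b -> b != c -> a != c ->
  typeI tau [set a; b] -> typeI tau [set b; c] -> typeII tau [set c; a] ->
  ~ typeII tau [set a; b] ->
  (face_caseI tau f /\ ~ face_caseII tau f) \/ (~ face_caseI tau f /\ face_caseII tau f).
Proof.
move=> E ab bc ac I1 I2 I3 nII; left; split.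
  by exists a, b, c; split.
case=> H _; apply: nII; apply: H; first by rewrite E sub2.
by rewrite cards2 ab.
Qed.

Lemma concludeII (V : finType) tau (f : {set V}) a b c :
  f = [set a; b; c] -> a != b -> b != c -> a != c ->
  typeII_dir tau [set a; b] a b -> typeII_dir tau [set b; c] b c ->
  typeII_dir tau [set c; a] c a ->
  ~ typeI tau [set a; b] -> ~ typeI tau [set b; c] -> ~ typeI tau [set c; a] ->
  (face_caseI tau f /\ ~ face_caseII tau f) \/ (~ face_caseI tau f /\ face_caseII tau f).
Proof.
move=> E ab bc ac D1 D2 D3 n1 n2 n3; right; split.
  case=> [a' [b' [c' [[E' a'b' _ _] [I1 _ _]]]]].
  have sf : [set a'; b'] \subset [set a; b; c] by rewrite -E E' sub2.
  have c2 : #|[set a'; b']| = 2 by rewrite cards2 a'b'.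
  by case: (sub3 ab bc ac sf c2) => E2; rewrite E2 in I1.
split; last by exists a, b, c; split.
move=> e ef e2; rewrite E in ef.
case: (sub3 ab bc ac ef e2) => ->; [by exists a, b | by exists b, c | by exists c, a].
Qed.

Lemma card3 (V : finType) (f : {set V}) : #|f| = 3 ->
  exists a, exists b, exists c, [/\ f = [set a; b; c], a != b, b != c & a != c].
Proof.
move=> f3.
have [a af] : exists a, a \in f by apply/card_gt0P; rewrite f3.
have : #|f :\ a| == 2 by move: (cardsD1 a f); rewrite af f3 /= => H; apply/eqP; lia.
case/cards2P => b [c [bc E]].
have bf : b \in f :\ a by rewrite E !inE eqxx.
have cf : c \in f :\ a by rewrite E !inE eqxx orbT.
rewrite !inE in bf cf.
case/andP: bf => ba _; case/andP: cf => ca _.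
exists a, b, c; split => //; try by rewrite eq_sym.
rewrite -(setD1K af) E.
by apply/setP => z; rewrite !inE orbA.
Qed.

Lemma valid3 (V : finType) (F : {set {set V}}) (u v w : V) :
  u != v -> v != w -> u != w -> [set u; v; w] \in F ->
  valid F ([set u; v], [set v; w]).
Proof.
move=> uv vw uw fF.
have [_ _ _ _ [_ _ U1 _ _]] := sets3 uv vw uw.
rewrite /valid /= !cards2 uv vw U1 fF !andbT /=.
apply/negP => /eqP E.
have : u \in [set v; w] by rewrite -E !inE eqxx.
by rewrite !inE (negbTE uv) (negbTE uw).
Qed.


Theorem proposition1 (V : finType) (F : {set {set V}})
    (tau : seq (seq {set V})) :
  triangulation F -> z_orientation F tau ->
  forall f, f \in F ->
    (face_caseI tau f /\ ~ face_caseII tau f) \/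
    (~ face_caseI tau f /\ face_caseII tau f).
Proof.
move=> [[_ H3] [_ H2 _ _]] Hz f fF.
have HT : tri3 F by split.
have [a [b [c [Ef ab bc ac]]]] := card3 (H3 f fF).
have ba : b != a by rewrite eq_sym.
have cb : c != b by rewrite eq_sym.
have ca : c != a by rewrite eq_sym.
have Fb : [set b; c; a] = [set a; b; c].
  by apply/setP => z; rewrite !inE; do !case: (_ == _).
have Fc : [set c; a; b] = [set a; b; c].
  by apply/setP => z; rewrite !inE; do !case: (_ == _).
have Fd : [set a; c; b] = [set a; b; c].
  by apply/setP => z; rewrite !inE; do !case: (_ == _).
rewrite Ef in fF.
have fFb : [set b; c; a] \in F by rewrite Fb.
have fFc : [set c; a; b] \in F by rewrite Fc.
have [d1 [d2 [P1 [A1 B1 A2 B2]]]] := edge3 HT Hz ab bc ac fF.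
have [d3 [d4 [P2 [A3 B3 A4 B4]]]] := edge3 HT Hz bc ca ba fFb.
have [d5 [d6 [P3 [A5 B5 A6 B6]]]] := edge3 HT Hz ca ab cb fFc.
have T1 := pres_tot HT Hz (valid3 ab bc ac fF).
have T2 := pres_tot HT Hz (valid3 bc ca ba fFb).
have T3 := pres_tot HT Hz (valid3 ca ab cb fFc).
case: T1 => p; case: T2 => q; case: T3 => r.
-
  apply: (concludeII Ef ab bc ac).
  + exact: (mkII P1 (A1 p) (B2 r)).
  + exact: (mkII P2 (A3 q) (B4 p)).
  + exact: (mkII P3 (A5 r) (B6 q)).
  + exact: (noI P1 (A1 p) (B2 r) ab).
  + exact: (noI P2 (A3 q) (B4 p) bc).
  + exact: (noI P3 (A5 r) (B6 q) ca).
-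
  rewrite -Fc in Ef.
  apply: (concludeI Ef ca ab cb).
  + exact: (mkI P3 (B5 r) (B6 q)).
  + exact: (mkI P1 (A1 p) (A2 r)).
  + by exists b, c; exact: (mkII P2 (A3 q) (B4 p)).
  + exact: (noII P3 (B5 r) (B6 q) ac).
-
  rewrite -Fb in Ef.
  apply: (concludeI Ef bc ca ba).
  + exact: (mkI P2 (B3 q) (B4 p)).
  + exact: (mkI P3 (A5 r) (A6 q)).
  + by exists a, b; exact: (mkII P1 (A1 p) (B2 r)).
  + exact: (noII P2 (B3 q) (B4 p) cb).
-
  apply: (concludeI Ef ab bc ac).
  + exact: (mkI P1 (A1 p) (A2 r)).
  + exact: (mkI P2 (B3 q) (B4 p)).
  + by exists a, c; exact: (mkII P3 (B5 r) (A6 q)).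
  + exact: (noII P1 (A1 p) (A2 r) ab).
-
  apply: (concludeI Ef ab bc ac).
  + exact: (mkI P1 (B1 p) (B2 r)).
  + exact: (mkI P2 (A3 q) (A4 p)).
  + by exists c, a; exact: (mkII P3 (A5 r) (B6 q)).
  + exact: (noII P1 (B1 p) (B2 r) ba).
-
  rewrite -Fb in Ef.
  apply: (concludeI Ef bc ca ba).
  + exact: (mkI P2 (A3 q) (A4 p)).
  + exact: (mkI P3 (B5 r) (B6 q)).
  + by exists b, a; exact: (mkII P1 (B1 p) (A2 r)).
  + exact: (noII P2 (A3 q) (A4 p) bc).
-
  rewrite -Fc in Ef.
  apply: (concludeI Ef ca ab cb).
  + exact: (mkI P3 (A5 r) (A6 q)).
  + exact: (mkI P1 (B1 p) (B2 r)).
  + by exists c, b; exact: (mkII P2 (B3 q) (A4 p)).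
  + exact: (noII P3 (A5 r) (A6 q) ca).
-
  rewrite -Fd in Ef.
  apply: (concludeII Ef ac cb ab).
  + by rewrite setUC; exact: (mkII P3 (B5 r) (A6 q)).
  + by rewrite setUC; exact: (mkII P2 (B3 q) (A4 p)).
  + by rewrite setUC; exact: (mkII P1 (B1 p) (A2 r)).
  + by rewrite setUC; exact: (noI P3 (B5 r) (A6 q) ac).
  + by rewrite setUC; exact: (noI P2 (B3 q) (A4 p) cb).
  + by rewrite setUC; exact: (noI P1 (B1 p) (A2 r) ba).
Qed.
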